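(* Let $M$ be a generic structure for the class $\mathcal{C}$ (as described in the context) and suppose $M\models R_n(\bar a,\bar b)$. Then the linear ordering induced by $K_n$ on the set of $E_n$-classes of $\{\bar c\in M : M\models K_n(\bar a,\bar c,\bar b)\}$ (namely, $\bar c$ precedes $\bar c'$ iff $K_n(\bar a,\bar c,\bar c')$) is dense and without endpoints.
   Context: Let $L=\{E_n,K_n,R_n : 2<n<\omega\}$ be a relational language, where $E_n$ and $R_n$ have arity $2n$ and $K_n$ has arity $3n$. All these relations hold only on tuples whose $n$-blocks consist of $n$ distinct elements, and their truth depends only on the underlying $n$-element sets of the blocks. Let $K$ be the class of finite $L$-structures $C$ such that for each $n$: (1) $E_n$ is an equivalence relation on the set ${C\choose n}$ of $n$-element subsets of $C$; (2) $R_n$ is irreflexive, respects $E_n$ (if $E_n(\bar x,\bar y)$, $E_n(\bar u,\bar w)$ and $R_n(\bar x,\bar u)$ then $R_n(\bar y,\bar w)$), and induces a partial injective function on ${C\choose n}/E_n$; (3) $K_n$ respects $E_n$ in each argument and induces a circular order on ${C\choose n}/E_n$; (4) $R_n(\bar x,\bar y)\wedge R_n(\bar y,\bar z)\to K_n(\bar x,\bar y,\bar z)$, and if $R_n(\bar v_i,\bar w_i)$ for $i=1,2,3$ then $K_n(\bar v_1,\bar v_2,\bar v_3)\leftrightarrow K_n(\bar w_1,\bar w_2,\bar w_3)$ (so $R_n$ is a partial automorphism of the circular order); (5) the partial function induced by $R_n$ extends to an injective function $f$ on some larger domain such that $f^n$ is the identity on its domain but $f^m(V)\ne V$ for every $V\in{C\choose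 n}/E_n$ and every $0<m<n$. A structure $A\in K$ is strong if for every $n$, either all elements of ${A\choose n}$ are pairwise $E_n$-equivalent, or for every $\bar a\in{A\choose n}$ there is a sequence $\bar a_1=\bar a,\bar a_2,\dots,\bar a_n$ of pairwise non-$E_n$-equivalent elements of ${A\choose n}$ with $R_n(\bar a_i,\bar a_{i+1})$ for $1\le i\le n-1$ and $R_n(\bar a_n,\bar a_1)$ (an $R_n$-cycle). Let $\mathcal{C}$ be the class of strong structures in $K$. A countable $L$-structure $M$ is generic for $\mathcal{C}$ if: $\mathcal{C}$ is exactly the class of finite substructures of $M$ that are strong (i.e. belong to $\mathcal{C}$); $M$ is the union of a chain of finite substructures belonging to $\mathcal{C}$; and whenever $A\subseteq M$ is a finite substructure in $\mathcal{C}$ and $A\subseteq B$ with $B\in\mathcal{C}$, $B$ embeds into $M$ over $A$ with image in $\mathcal{C}$. Such an $M$ exists, is $\aleph_0$-categorical, and every isomorphism between finite substructures of $M$ belonging to $\mathcal{C}$ extends to an automorphism of $M$. *)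

(* Defs.v *)
From mathcomp Require Import all_boot.
Set Implicit Arguments. Unset Strict Implicit. Unset Printing Implicit Defensive.

(* A 2n-ary relation is
   represented as a relation on pairs of n-blocks (n-tuples), a 3n-ary one on
   triples of n-blocks.  The components at n <= 2 are junk and are ignored by
   every definition below (they only ever get used for 2 < n). *)
Record Lstr := LStr {
  car : eqType;
  rE : forall n, n.-tuple car -> n.-tuple car -> Prop;
  rR : forall n, n.-tuple car -> n.-tuple car -> Prop;
  rK : forall n, n.-tuple car -> n.-tuple car -> n.-tuple car -> Prop }.

(* Language convention: relations hold only on tuples whose n-blocks consist of
   n distinct elements, and depend only on the underlying n-sets. *)
Definition Lwf (S : Lstr) : Prop :=
  forall n, 2 < n -> forall x y z x' y' z' : n.-tuple (car S),
    (rE x y -> uniq x /\ uniq y) /\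
    (rR x y -> uniq x /\ uniq y) /\
    (rK x y z -> [/\ uniq x, uniq y & uniq z]) /\
    (perm_eq x x' -> perm_eq y y' -> perm_eq z z' ->
       [/\ rE x y -> rE x' y', rR x y -> rR x' y' & rK x y z -> rK x' y' z']).

(* x is (a tuple listing) an element of (A choose n) *)
Definition inA (S : Lstr) (A : car S -> Prop) n (x : n.-tuple (car S)) : Prop :=
  uniq x /\ forall i, A (tnth x i).

Definition finite_on (S : Lstr) (A : car S -> Prop) : Prop :=
  exists s : seq (car S), forall x, A x -> x \in s.

Definition finite_str (S : Lstr) : Prop := finite_on (fun _ : car S => True).

Definition inK_on (S : Lstr) (A : car S -> Prop) : Prop :=
  forall n, 2 < n ->
  let I := @inA S A n in
  let E := @rE S n in let R := @rR S n in let K := @rK S n in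
  [/\ (forall x, I x -> E x x),
      (forall x y, I x -> I y -> E x y -> E y x) &
      (forall x y z, I x -> I y -> I z -> E x y -> E y z -> E x z)] /\
  (* (2) R_n irreflexive, respects E_n, partial injective function on classes *)
  [/\ (forall x, I x -> ~ R x x),
      (forall x y u w, I x -> I y -> I u -> I w ->
         E x y -> E u w -> R x u -> R y w),
      (forall x y y', I x -> I y -> I y' -> R x y -> R x y' -> E y y') &
      (forall x x' y, I x -> I x' -> I y -> R x y -> R x' y -> E x x')] /\
  (* (3) K_n respects E_n in each argument and is a circular order on classes *)
  [/\ (forall x y z x' y' z', I x -> I y -> I z -> I x' -> I y' -> I z' ->
         E x x' -> E y y' -> E z z' -> K x y z -> K x' y' z'),
      (forall x y z, I x -> I y -> I z -> K x y z -> K y z x),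
      (forall x y z, I x -> I y -> I z -> K x y z -> ~ K z y x),
      (forall x y z w, I x -> I y -> I z -> I w -> K x y z -> K x z w -> K x y w) &
      (forall x y z, I x -> I y -> I z -> ~ E x y -> ~ E y z -> ~ E x z ->
         K x y z \/ K z y x)] /\
  (* (4) R_n is a partial automorphism of the circular order *)
  (forall x y z, I x -> I y -> I z -> R x y -> R y z -> K x y z) /\
  (forall v1 v2 v3 w1 w2 w3, I v1 -> I v2 -> I v3 -> I w1 -> I w2 -> I w3 ->
     R v1 w1 -> R v2 w2 -> R v3 w3 -> (K v1 v2 v3 <-> K w1 w2 w3)) /\
  (* (5) the partial function induced by R_n on classes (classes embedded into a
     larger domain D via cls) extends to an injective f on D with f^n = id and
     f^m(V) <> V for every class V and 0 < m < n *)
  (exists (D : Type) (cls : n.-tuple (car S) -> D) (f : D -> D),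
     (forall x y, I x -> I y -> (cls x = cls y <-> E x y)) /\
     injective f /\
     (forall d, iter n f d = d) /\
     (forall x y, I x -> I y -> R x y -> f (cls x) = cls y) /\
     (forall x m, I x -> 0 < m < n -> iter m f (cls x) <> cls x)).

Definition strong_cond (S : Lstr) (A : car S -> Prop) : Prop :=
  forall n, 2 < n ->
  (forall x y, inA A x -> inA A y -> @rE S n x y) \/
  (forall x, inA A x -> exists s : nat -> n.-tuple (car S),
     [/\ s 0 = x,
         (forall i, i < n -> inA A (s i)),
         (forall i j, i < n -> j < n -> i <> j -> ~ rE (s i) (s j)),
         (forall i, i.+1 < n -> rR (s i) (s i.+1)) &
         rR (s n.-1) (s 0)]).

Definition strong_on (S : Lstr) (A : car S -> Prop) : Prop :=
  inK_on A /\ strong_cond A.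

Definition emb_on (S1 S2 : Lstr) (D : car S1 -> Prop) (f : car S1 -> car S2) : Prop :=
  (forall x y, D x -> D y -> f x = f y -> x = y) /\
  forall n, 2 < n -> forall x y z : n.-tuple (car S1),
    (forall i, D (tnth x i)) -> (forall i, D (tnth y i)) -> (forall i, D (tnth z i)) ->
    [/\ rE x y <-> rE (map_tuple f x) (map_tuple f y),
        rR x y <-> rR (map_tuple f x) (map_tuple f y) &
        rK x y z <-> rK (map_tuple f x) (map_tuple f y) (map_tuple f z)].

Definition in_C (B : Lstr) : Prop :=
  finite_str B /\ Lwf B /\ strong_on (fun _ : car B => True).

Definition generic (M : Lstr) : Prop :=
  Lwf M /\
  (exists c : car M -> nat, injective c) /\
  (forall B, in_C B -> exists g : car B -> car M, emb_on (fun _ => True) g) /\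
  (exists Ak : nat -> car M -> Prop,
     (forall k, finite_on (Ak k) /\ strong_on (Ak k)) /\
     (forall k x, Ak k x -> Ak k.+1 x) /\
     (forall x, exists k, Ak k x)) /\
  (forall A : car M -> Prop, finite_on A -> strong_on A ->
   forall B, in_C B -> forall e : car M -> car B, emb_on A e ->
   exists g : car B -> car M,
     emb_on (fun _ => True) g /\ (forall x, A x -> g (e x) = x) /\
     strong_on (fun y => exists b, g b = y)).

(* Main.v *)
Require Import Defs.
From Stdlib Require Import Classical ClassicalDescription PropExtensionality IndefiniteDescription.
From mathcomp Require Import all_boot zify.
Set Bullet Behavior "Strict Subproofs".
Set Implicit Arguments. Unset Strict Implicit. Unset Printing Implicit Defensive.

Definition Kax {T : Type} (I : T -> Prop) (E R : T -> T -> Prop) (K : T -> T -> T -> Prop) : Prop :=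
  [/\ (forall x, I x -> E x x),
      (forall x y, I x -> I y -> E x y -> E y x) &
      (forall x y z, I x -> I y -> I z -> E x y -> E y z -> E x z)] /\
  [/\ (forall x, I x -> ~ R x x),
      (forall x y u w, I x -> I y -> I u -> I w ->
         E x y -> E u w -> R x u -> R y w),
      (forall x y y', I x -> I y -> I y' -> R x y -> R x y' -> E y y') &
      (forall x x' y, I x -> I x' -> I y -> R x y -> R x' y -> E x x')] /\
  [/\ (forall x y z x' y' z', I x -> I y -> I z -> I x' -> I y' -> I z' ->
         E x x' -> E y y' -> E z z' -> K x y z -> K x' y' z'),
      (forall x y z, I x -> I y -> I z -> K x y z -> K y z x),
      (forall x y z, I x -> I y -> I z -> K x y z -> ~ K z y x),
      (forall x y z w, I x -> I y -> I z -> I w -> K x y z -> K x z w -> K x y w) &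
      (forall x y z, I x -> I y -> I z -> ~ E x y -> ~ E y z -> ~ E x z ->
         K x y z \/ K z y x)] /\
  (forall x y z, I x -> I y -> I z -> R x y -> R y z -> K x y z) /\
  (forall v1 v2 v3 w1 w2 w3, I v1 -> I v2 -> I v3 -> I w1 -> I w2 -> I w3 ->
     R v1 w1 -> R v2 w2 -> R v3 w3 -> (K v1 v2 v3 <-> K w1 w2 w3)).

Section Ext.
Variables (Pt : Type) (J : Pt -> Prop) (E R : Pt -> Pt -> Prop) (K : Pt -> Pt -> Pt -> Prop).
Hypothesis HK : Kax J E R K.

Ltac esat Es Et := repeat match goal with
 | H : E ?a ?b, Ja : J ?a, Jb : J ?b |- _ =>
     lazymatch goal with | _ : E b a |- _ => fail | _ => have := Es a b Ja Jb H; intro end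
 | H : E ?a ?b, H' : E ?b ?c, Ja : J ?a, Jb : J ?b, Jc : J ?c |- _ =>
     lazymatch goal with | _ : E a c |- _ => fail | _ => have := Et a b c Ja Jb Jc H H'; intro end
 end.

Definition E' (p q : Pt * bool) := p.2 = q.2 /\ E p.1 q.1.
Definition R' (p q : Pt * bool) := p.2 = q.2 /\ R p.1 q.1.
Definition T1 (x y z : Pt * bool) := [/\ E x.1 y.1, x.2 = false, y.2 = true & ~ E y.1 z.1].
Definition K' (x y z : Pt * bool) := K x.1 y.1 z.1 \/ T1 x y z \/ T1 y z x \/ T1 z x y.
Definition J' (p : Pt * bool) := J p.1.

Lemma Knot x y z : J x -> J y -> J z -> K x y z -> ~ E x y /\ ~ E y z /\ ~ E x z.
Proof.
case: HK => [[Er Es Et] [[Ri Rr Rf Rj] [[Kr Kc Ka Kt Ko] [RK Ra]]]] Jx Jy Jz Kxyz.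
have H1 : forall x y z, J x -> J y -> J z -> K x y z -> ~ E x y.
  move=> x1 y1 z1 J1 J2 J3 K1 E1.
  have K2 : K y1 y1 z1 by apply: (Kr x1 y1 z1) => //; auto.
  have K3 : K z1 y1 y1 by apply: (Kc y1 z1 y1) => //; apply: (Kc y1 y1 z1).
  exact: (Ka y1 y1 z1).
split; first exact: (H1 x y z).
split; first by apply: (H1 y z x) => //; apply: (Kc x y z).
move=> Exz; apply: (H1 z x y) => //; first by apply: (Kc y z x) => //; apply: (Kc x y z).
by apply: (Es).
Qed.

Lemma RE v1 v2 w1 w2 : J v1 -> J v2 -> J w1 -> J w2 -> R v1 w1 -> R v2 w2 ->
  (E v1 v2 <-> E w1 w2).
Proof.
case: HK => [[Er Es Et] [[Ri Rr Rf Rj] _]] J1 J2 J3 J4 R1 R2; split => Hv.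
  have : R v2 w1 by apply: (Rr v1 v2 w1 w1) => //; apply: (Er).
  by move=> R3; apply: (Rf v2).
have : R v1 w2 by apply: (Rr v1 v1 w1 w2) => //; apply: (Er).
by move=> R3; apply: (Rj v1 v2 w2).
Qed.

Lemma Kax_ext : Kax J' E' R' K'.
Proof.
have HK0 := HK.
case: HK0 => [[Er Es Et] [[Ri Rr Rf Rj] [[Kr Kc Ka Kt Ko] [RK Ra]]]].
have Esn : forall x y, J x -> J y -> ~ E x y -> ~ E y x.
  by move=> x y Jx Jy H1 H2; apply: H1; apply: (Es).
split; last split; last split; last split.
- split.
  + by move=> [x f] Jx; split => //; apply: (Er).
  + by move=> [x f] [y g] Jx Jy [/= -> H]; split => //; apply: (Es).
  + move=> [x f] [y g] [z h] Jx Jy Jz [/= -> H] [/= -> H']; split => //.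
    exact: (Et x y z).
- split.
  + by move=> [x f] Jx [_ H]; apply: (Ri x).
  + move=> [x f] [y g] [u h] [w k] Jx Jy Ju Jw [/= e1 H1] [/= e2 H2] [/= e3 H3].
    split; first by rewrite /= -e1 -e2.
    exact: (Rr x y u w).
  + move=> [x f] [y g] [y' g'] Jx Jy Jy' [/= e1 H1] [/= e2 H2].
    split; first by rewrite /= -e1 -e2.
    exact: (Rf x y y').
  + move=> [x f] [x' f'] [y g] Jx Jx' Jy [/= e1 H1] [/= e2 H2].
    split; first by rewrite /= e1 e2.
    exact: (Rj x x' y).
- split.
  + move=> [x f] [y g] [z h] [x' f'] [y' g'] [z' h'] Jx Jy Jz Jx' Jy' Jz'
      [/= e1 E1] [/= e2 E2] [/= e3 E3]; subst f' g' h'.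
    rewrite /K' /T1 /=.
    have Ex'x := Es x x' Jx Jx' E1.
    have Ey'y := Es y y' Jy Jy' E2.
    have Ez'z := Es z z' Jz Jz' E3.
    case=> [H|[[H1 H2 H3 H4]|[[H1 H2 H3 H4]|[H1 H2 H3 H4]]]].
    * by left; apply: (Kr x y z).
    * right; left; split => //.
        by apply: (Et x' x y') => //; apply: (Et x y y').
      move=> H5; apply: H4; apply: (Et y y' z) => //; apply: (Et y' z' z) => //.
    * right; right; left; split => //.
        by apply: (Et y' y z') => //; apply: (Et y z z').
      move=> H5; apply: H4; apply: (Et z z' x) => //; apply: (Et z' x' x) => //.
    * right; right; right; split => //.
        by apply: (Et z' z x') => //; apply: (Et z x x').
      move=> H5; apply: H4; apply: (Et x x' y) => //; apply: (Et x' y' y) => //.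
  + move=> x y z Jx Jy Jz; rewrite /K'.
    case=> [H|[H|[H|H]]].
    * by left; apply: (Kc).
    * by right; right; right.
    * by right; left.
    * by right; right; left.
  + move=> [x f] [y g] [z h] Jx Jy Jz; rewrite /K' /T1 /J' /= in Jx Jy Jz *.
    case=> [H|[[H1 H2 H3 H4]|[[H1 H2 H3 H4]|[H1 H2 H3 H4]]]];
    case=> [H'|[[H1' H2' H3' H4']|[[H1' H2' H3' H4']|[H1' H2' H3' H4']]]]; subst => //.
    all: try by apply: (Ka x y z).
    all: try by (have := Knot Jx Jy Jz H; intuition).
    all: try by (have := Knot Jz Jy Jx H'; intuition).
    all: try by esat Es Et; contradiction.
  + move=> [x f] [y g] [z h] [w k] Jx Jy Jz Jw; rewrite /K' /T1 /J' /= in Jx Jy Jz Jw *.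
    case=> [H|[[H1 H2 H3 H4]|[[H1 H2 H3 H4]|[H1 H2 H3 H4]]]];
    case=> [H'|[[H1' H2' H3' H4']|[[H1' H2' H3' H4']|[H1' H2' H3' H4']]]]; subst => //.
    all: try pose proof (Knot Jx Jy Jz H) as [N1 [N2 N3]].
    all: try pose proof (Knot Jx Jz Jw H') as [N1' [N2' N3']].
    all: try by exfalso; esat Es Et; contradiction.
    all: first [ by left; apply: (Kt x y z w)
               | by left; apply: (Kr x y z x y w) => //; first [apply: (Er); assumption | esat Es Et; assumption]
               | by left; apply: (Kr x z w x y w) => //; first [apply: (Er); assumption | esat Es Et; assumption]
               | by right; left; split => //; try (move=> ?); esat Es Et; first [assumption | contradiction]
               | by right; right; left; split => //; try (move=> ?); esat Es Et; first [assumption | contradiction]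
               | by right; right; right; split => //; try (move=> ?); esat Es Et; first [assumption | contradiction] ].
  + move=> [x f] [y g] [z h] Jx Jy Jz; rewrite /E' /K' /T1 /J' /= in Jx Jy Jz *.
    move=> nE1 nE2 nE3.
    case: (classic (E x y)) => exy; case: (classic (E y z)) => eyz; case: (classic (E x z)) => exz.
    all: try by exfalso; esat Es Et; contradiction.
    all: case: f nE1 nE2 nE3; case: g; case: h => /= nE1 nE2 nE3.
    all: try by exfalso; first [by apply: nE1; split | by apply: nE2; split | by apply: nE3; split].
    all: try by case: (Ko x y z Jx Jy Jz exy eyz exz) => ?; [left; left | right; left].
    all: first [ by left; right; left; split => //; first [assumption | move=> ?; esat Es Et; contradiction | esat Es Et; assumption]
               | by left; right; right; left; split => //; first [assumption | move=> ?; esat Es Et; contradiction | esat Es Et; assumption]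
               | by left; right; right; right; split => //; first [assumption | move=> ?; esat Es Et; contradiction | esat Es Et; assumption]
               | by right; right; left; split => //; first [assumption | move=> ?; esat Es Et; contradiction | esat Es Et; assumption]
               | by right; right; right; left; split => //; first [assumption | move=> ?; esat Es Et; contradiction | esat Es Et; assumption]
               | by right; right; right; right; split => //; first [assumption | move=> ?; esat Es Et; contradiction | esat Es Et; assumption] ].
- move=> [x f] [y g] [z h] Jx Jy Jz [/= e1 R1] [/= e2 R2]; left.
  exact: (RK x y z).
- move=> [v1 f1] [v2 f2] [v3 f3] [w1 g1] [w2 g2] [w3 g3] J1 J2 J3 J4 J5 J6
    [/= e1 R1] [/= e2 R2] [/= e3 R3]; subst g1 g2 g3.
  rewrite /J' /= in J1 J2 J3 J4 J5 J6.
  rewrite /K' /T1 /=.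
  have PE := propositional_extensionality.
  rewrite ?(PE _ _ (RE J1 J2 J4 J5 R1 R2)) ?(PE _ _ (RE J2 J3 J5 J6 R2 R3)).
  rewrite ?(PE _ _ (RE J3 J1 J6 J4 R3 R1)) ?(PE _ _ (Ra v1 v2 v3 w1 w2 w3 J1 J2 J3 J4 J5 J6 R1 R2 R3)).
  rewrite ?(PE _ _ (RE J2 J1 J5 J4 R2 R1)) ?(PE _ _ (RE J3 J2 J6 J5 R3 R2)).
  rewrite ?(PE _ _ (RE J1 J3 J4 J6 R1 R3)).
  by [].
Qed.
End Ext.

Lemma Kax_pull (Pt T : Type) (J : Pt -> Prop) (E R : Pt -> Pt -> Prop) (K : Pt -> Pt -> Pt -> Prop)
  (I : T -> Prop) (q : T -> Pt) :
  (forall t, I t -> J (q t)) -> Kax J E R K ->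
  Kax I (fun x y => I x /\ I y /\ E (q x) (q y)) (fun x y => I x /\ I y /\ R (q x) (q y))
        (fun x y z => [/\ I x, I y, I z & K (q x) (q y) (q z)]).
Proof.
move=> HJ [[Er Es Et] [[Ri Rr Rf Rj] [[Kr Kc Ka Kt Ko] [RK Ra]]]].
split; last split; last split; last split.
- split.
  + by move=> x Ix; split => //; split => //; apply: Er; auto.
  + by move=> x y Ix Iy [_ [_ H]]; split => //; split => //; apply: Es; auto.
  + by move=> x y z Ix Iy Iz [_ [_ H]] [_ [_ H']]; split => //; split => //; apply: (Et (q x) (q y)); auto.
- split.
  + by move=> x Ix [_ [_ H]]; apply: (Ri (q x)); auto.
  + move=> x y u w Ix Iy Iu Iw [_ [_ H1]] [_ [_ H2]] [_ [_ H3]]; split => //; split => //.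
    by apply: (Rr (q x) (q y) (q u) (q w)); auto.
  + move=> x y y' Ix Iy Iy' [_ [_ H1]] [_ [_ H2]]; split => //; split => //.
    by apply: (Rf (q x)); auto.
  + move=> x x' y Ix Ix' Iy [_ [_ H1]] [_ [_ H2]]; split => //; split => //.
    by apply: (Rj _ _ (q y)); auto.
- split.
  + move=> x y z x' y' z' Ix Iy Iz Ix' Iy' Iz' [_ [_ H1]] [_ [_ H2]] [_ [_ H3]] [_ _ _ H]; split => //.
    by apply: (Kr (q x) (q y) (q z)); auto.
  + move=> x y z Ix Iy Iz [_ _ _ H]; split => //; apply: Kc; auto.
  + move=> x y z Ix Iy Iz [_ _ _ H] [_ _ _ H']; apply: (Ka (q x) (q y) (q z)); auto.
  + move=> x y z w Ix Iy Iz Iw [_ _ _ H] [_ _ _ H']; split => //; apply: (Kt _ _ (q z)); auto.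
  + move=> x y z Ix Iy Iz n1 n2 n3.
    have [H|H] := Ko (q x) (q y) (q z) (HJ _ Ix) (HJ _ Iy) (HJ _ Iz)
      (fun e => n1 (conj Ix (conj Iy e))) (fun e => n2 (conj Iy (conj Iz e)))
      (fun e => n3 (conj Ix (conj Iz e))).
    * by left; split.
    * by right; split.
- move=> x y z Ix Iy Iz [_ [_ H1]] [_ [_ H2]]; split => //; apply: RK; auto.
- move=> v1 v2 v3 w1 w2 w3 I1 I2 I3 I4 I5 I6 [_ [_ H1]] [_ [_ H2]] [_ [_ H3]].
  have := Ra (q v1) (q v2) (q v3) (q w1) (q w2) (q w3); move=> /(_ (HJ _ I1) (HJ _ I2) (HJ _ I3) (HJ _ I4) (HJ _ I5) (HJ _ I6) H1 H2 H3) [A B].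
  by split; move=> [_ _ _ H]; split => //; auto.
Qed.

Lemma Kax_triv (T : Type) (I : T -> Prop) :
  Kax I (fun x y => I x /\ I y) (fun _ _ => False) (fun _ _ _ => False).
Proof.
split; last split; last split; last split.
- split; [by move=> x Ix; split | by move=> x y Ix Iy _; split | by move=> x y z Ix Iy Iz _ _; split].
- by split; intros; tauto.
- split; try by intros; tauto.
- by intros; tauto.
- by intros; tauto.
Qed.


Definition X5 (S : Lstr) (A : car S -> Prop) n :=
  (exists (D : Type) (cls : n.-tuple (car S) -> D) (f : D -> D),
     (forall x y, inA A x -> inA A y -> (cls x = cls y <-> rE x y)) /\
     injective f /\
     (forall d, iter n f d = d) /\
     (forall x y, inA A x -> inA A y -> rR x y -> f (cls x) = cls y) /\
     (forall x m, inA A x -> 0 < m < n -> iter m f (cls x) <> cls x)).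

Lemma inK_onP (S : Lstr) (A : car S -> Prop) :
  inK_on A <-> (forall n, 2 < n -> Kax (@inA S A n) (@rE S n) (@rR S n) (@rK S n) /\ X5 A n).
Proof.
split => H m Hm; have := H m Hm; rewrite /Kax /X5 /=; tauto.
Qed.

Definition pb (P : Prop) : bool := if excluded_middle_informative P then true else false.
Lemma pbP P : reflect P (pb P).
Proof. by rewrite /pb; case: excluded_middle_informative => H; constructor. Qed.

Definition cyc (M : Lstr) (A : car M -> Prop) m (s : nat -> m.-tuple (car M)) :=
  [/\ (forall i, i < m -> inA A (s i)),
      (forall i j, i < m -> j < m -> i <> j -> ~ rE (s i) (s j)),
      (forall i, i.+1 < m -> rR (s i) (s i.+1)) &
      rR (s m.-1) (s 0)].

Lemma cycR (M : Lstr) (A : car M -> Prop) m (s : nat -> m.-tuple (car M)) :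
  cyc A s -> forall k, k < m -> rR (s k) (s (k.+1 %% m)).
Proof.
case=> _ _ H1 H2 k km.
case: (ltnP k.+1 m) => h.
  by rewrite modn_small //; apply: H1.
have e1 : k = m.-1 by lia.
have e2 : k.+1 = m by lia.
by rewrite e2 modnn e1.
Qed.

Lemma cyc_shift (M : Lstr) (A : car M -> Prop) m (s : nat -> m.-tuple (car M)) j :
  0 < m -> cyc A s -> cyc A (fun i => s ((j + i) %% m)).
Proof.
move=> m0 Hc; have Hc' := Hc; case: Hc' => H0 H1 H2 H3.
have HR := cycR Hc.
split.
- by move=> i _; apply: H0; rewrite ltn_mod.
- move=> i k im km ik; apply: H1; rewrite ?ltn_mod // => e.
  apply: ik; have : (j + i == j + k %[mod m]) by rewrite e.
  by rewrite eqn_modDl !modn_small // => /eqP.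
- move=> i im; have := HR ((j + i) %% m); rewrite ltn_mod => /(_ m0).
  by rewrite -addn1 modnDml addn1 addnS.
- have := HR ((j + m.-1) %% m); rewrite ltn_mod => /(_ m0).
  rewrite -addn1 modnDml addn1 -addnS prednK // addn0.
  by rewrite modnDr.
Qed.

Lemma count_lt_iota0 k m : count (fun i => i < k) (iota 0 m) = minn k m.
Proof.
elim: m => [|m IH]; first by rewrite minn0.
rewrite -addn1 iotaD count_cat IH /= add0n addn0.
rewrite /minn; case: (ltnP m k) => h /=.
  have f1 : (k < m) = false by rewrite ltnNge ltnW.
  have f2 : (k < m + 1) = false by rewrite addn1 ltnS leqNgt h.
  by rewrite f1 f2.
rewrite addn0 addn1 ltnS h; case: (ltnP k m) => //.
move=> h2; have -> : k = m by apply/eqP; rewrite eqn_leq h2 h.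
by [].
Qed.

Lemma count_lt_iota k m : k <= m -> count (fun i => i < k) (iota 0 m) = k.
Proof. by move=> km; rewrite count_lt_iota0; apply/minn_idPl. Qed.

Lemma iter_pair (D : Type) (f : D -> D) (b : bool) k d :
  iter k (fun p : D * bool => (f p.1, p.2)) (d, b) = (iter k f d, b).
Proof. (by elim: k => //= k ->). Qed.

Definition rotm m (k : nat) : nat := if k < m then k.+1 %% m else k.

Lemma rotm_iter m k i : k < m -> iter i (rotm m) k = (k + i) %% m.
Proof.
move=> km; elim: i => [|i IH] /=; first by rewrite addn0 modn_small.
have m0 : 0 < m by apply: leq_ltn_trans km.
rewrite IH /rotm ltn_mod m0.
by rewrite -addn1 modnDml addn1 addnS.
Qed.

Lemma rotm_inj m : injective (rotm m).
Proof.
move=> k k'; rewrite /rotm.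
case: (ltnP k m) => h; case: (ltnP k' m) => h' //.
- move=> e; have : (k.+1 == k'.+1 %[mod m]) by rewrite e.
  by rewrite -[k.+1]addn1 -[k'.+1]addn1 eqn_modDr !modn_small // => /eqP.
- have m0 : 0 < m by apply: leq_ltn_trans h.
  move=> e; have : k.+1 %% m < m by rewrite ltn_mod.
  by rewrite e ltnNge h'.
- have m0 : 0 < m by apply: leq_ltn_trans h'.
  move=> e; have : k'.+1 %% m < m by rewrite ltn_mod.
  by rewrite -e ltnNge h.
Qed.

Lemma rotm_id m k : iter m (rotm m) k = k.
Proof.
case: (ltnP k m) => h; first by rewrite rotm_iter // modnDr modn_small.
have e : rotm m k = k by rewrite /rotm ltnNge h.
have H : forall i, iter i (rotm m) k = k by elim=> //= i ->.
exact: H.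
Qed.


Section Build.
Variables (M : Lstr) (HL : Lwf M) (A : car M -> Prop) (HA : strong_on A).
Variables (S : seq (car M)) (HSu : uniq S) (HSA : forall x, x \in S <-> A x).
Variables (x0 : car M) (n : nat) (Hn : 2 < n) (u : n.-tuple (car M)) (Hu : inA A u).
Hypothesis Hnt : ~ (forall x y : n.-tuple (car M), inA A x -> inA A y -> rE x y).

Local Notation N := (size S).
Definition carB : eqType := ('I_N + 'I_N.+1)%type.
Definition isNew (b : carB) : bool := if b is inr _ then true else false.
Definition pi (b : carB) : car M := if b is inl i then nth x0 S i else x0.
Definition e (x : car M) : carB :=
  if (insub (index x S) : option 'I_N) is Some i then inl i else inr ord0.

Lemma e_in x : x \in S -> isNew (e x) = false /\ pi (e x) = x.
Proof.
move=> xS; rewrite /e insubT; first by rewrite index_mem.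
by move=> h /=; split => //; rewrite nth_index.
Qed.

Lemma e_nth (i : 'I_N) : e (nth x0 S i) = inl i.
Proof.
rewrite /e insubT; first by rewrite index_uniq.
move=> h; congr inl; apply: val_inj => /=; by rewrite index_uniq.
Qed.

Lemma e_inj x y : x \in S -> y \in S -> e x = e y -> x = y.
Proof. by move=> xS yS exy; rewrite -(e_in xS).2 -(e_in yS).2 exy. Qed.

Lemma pi_inl (b : carB) : isNew b = false -> e (pi b) = b /\ pi b \in S.
Proof. by case: b => // i _ /=; rewrite e_nth mem_nth. Qed.


Definition tr m := forall x y : m.-tuple (car M), inA A x -> inA A y -> rE x y.

Lemma sex m : exists s : nat -> m.-tuple (car M),
  (2 < m -> ~ tr m -> cyc A s) /\ (forall H : n = m, s 0 = tcast H u).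
Proof.
case: (eqVneq n m) => [<-|nm].
  case: (HA.2 n Hn) => [Htr|Hc]; first by case: Hnt.
  have [s [s0 s1 s2 s3 s4]] := Hc u Hu.
  exists s; split; first by move=> _ _; split.
  by move=> H; rewrite tcast_id.
case: (classic (2 < m /\ ~ tr m)) => [[m2 ntr]|h]; last first.
  exists (fun _ => [tuple of nseq m x0]); split; first by move=> m2 ntr; case: h.
  by move=> H; exfalso; move: nm; rewrite H eqxx.
have [x Hx] : exists x : m.-tuple (car M), inA A x.
  apply: NNPP => hx; apply: ntr => x y Hx; case: hx; by exists x.
case: (HA.2 m m2) => [Htr|Hc]; first by case: ntr.
have [s [s0 s1 s2 s3 s4]] := Hc x Hx.
exists s; split; first by move=> _ _; split.
by move=> H; exfalso; move: nm; rewrite H eqxx.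
Qed.

Definition sF m : nat -> m.-tuple (car M) :=
  proj1_sig (constructive_indefinite_description _ (sex m)).

Lemma sF_cyc m : 2 < m -> ~ tr m -> cyc A (sF m).
Proof. rewrite /sF; case: constructive_indefinite_description => s [h _] /=; exact: h. Qed.

Lemma sF_n : sF n 0 = u.
Proof.
rewrite /sF; case: constructive_indefinite_description => s [_ h] /=.
by rewrite (h erefl) tcast_id.
Qed.

Definition rep m (x : m.-tuple carB) : m.-tuple (car M) :=
  if has isNew x then sF m (count isNew x).-1 else map_tuple pi x.
Definition q m (x : m.-tuple carB) := (rep x, has isNew x).
Definition Iu m (x : m.-tuple carB) : Prop := uniq x /\ (forall i : 'I_m, True).
Definition trb m := pb (tr m).

Definition rEB m (x y : m.-tuple carB) : Prop :=
  if trb m then Iu x /\ Iu y else Iu x /\ Iu y /\ E' (@rE M m) (q x) (q y).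
Definition rRB m (x y : m.-tuple carB) : Prop :=
  if trb m then False else Iu x /\ Iu y /\ R' (@rR M m) (q x) (q y).
Definition rKB m (x y z : m.-tuple carB) : Prop :=
  if trb m then False else [/\ Iu x, Iu y, Iu z & K' (@rE M m) (@rK M m) (q x) (q y) (q z)].

Definition B := LStr rEB rRB rKB.


Lemma Iu_rep m (x : m.-tuple carB) : 2 < m -> ~ tr m -> Iu x -> inA A (rep x).
Proof.
move=> m2 ntr [ux _]; rewrite /rep; case: ifP => hn.
  have [c0 _ _ _] := sF_cyc m2 ntr; apply: c0.
  have h1 := count_size isNew x; have h2 : 0 < count isNew x by rewrite -has_count.
  rewrite size_tuple in h1; lia.
have hall : forall b, b \in x -> isNew b = false.
  by move=> b bx; apply: negbTE; apply: contraFN hn => nb; apply/hasP; exists b.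
split.
  rewrite map_inj_in_uniq // => b b' bx b'x eb.
  by rewrite -(pi_inl (hall _ bx)).1 -(pi_inl (hall _ b'x)).1 eb.
move=> i; rewrite tnth_map; apply/HSA; apply: (pi_inl _).2; apply: hall; exact: mem_tnth.
Qed.

Lemma rep_e m (y : m.-tuple (car M)) : (forall i, A (tnth y i)) ->
  has isNew (map_tuple e y) = false /\ rep (map_tuple e y) = y.
Proof.
move=> hy.
have hS : forall z, z \in y -> z \in S.
  by move=> z /tnthP [i ->]; apply/HSA.
have hn : has isNew (map_tuple e y) = false.
  apply/negbTE/hasPn => b /mapP [z zy ->]; by rewrite (e_in (hS _ zy)).1.
split => //; rewrite /rep hn; apply: eq_from_tnth => i.
by rewrite !tnth_map (e_in (hS _ (mem_tnth _ _))).2.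
Qed.

Lemma perm_rep m (x x' : m.-tuple carB) : perm_eq x x' ->
  has isNew x = has isNew x' /\ perm_eq (rep x) (rep x').
Proof.
move=> hp; have hh := perm_has isNew hp; split => //.
rewrite /rep -hh; case: ifP => _; last by rewrite perm_map.
by rewrite (permP hp).
Qed.


Lemma permM m (x x' y y' z z' : m.-tuple (car M)) : 2 < m ->
  perm_eq x x' -> perm_eq y y' -> perm_eq z z' ->
  [/\ rE x y = rE x' y', rR x y = rR x' y' & rK x y z = rK x' y' z'].
Proof.
move=> m2 px py pz.
have [a1 a2 a3] := (HL m2 x y z x' y' z').2.2.2 px py pz.
have [b1 b2 b3] := (HL m2 x' y' z' x y z).2.2.2
  (etrans (perm_sym _ _) px) (etrans (perm_sym _ _) py) (etrans (perm_sym _ _) pz).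
by split; apply: propositional_extensionality; split.
Qed.

Lemma Iu_perm m (x x' : m.-tuple carB) : perm_eq x x' -> Iu x = Iu x'.
Proof. by move=> p; rewrite /Iu (perm_uniq p). Qed.

Lemma permB m (x x' y y' z z' : m.-tuple carB) : 2 < m ->
  perm_eq x x' -> perm_eq y y' -> perm_eq z z' ->
  [/\ rEB x y = rEB x' y', rRB x y = rRB x' y' & rKB x y z = rKB x' y' z'].
Proof.
move=> m2 px py pz.
have [hx rx] := perm_rep px; have [hy ry] := perm_rep py; have [hz rz] := perm_rep pz.
have [e1 r1 k1] := permM m2 rx ry rz.
have [e2 _ _] := permM m2 ry rz rx.
have [e3 _ _] := permM m2 rz rx ry.
rewrite /rEB /rRB /rKB /E' /R' /K' /T1 /q /= (Iu_perm px) (Iu_perm py) (Iu_perm pz).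
by rewrite hx hy hz e1 r1 k1 e2 e3.
Qed.

Lemma Lwf_B : Lwf B.
Proof.
move=> m m2 x y z x' y' z' /=; split; [|split; [|split]].
- by rewrite /rEB; case: trb => [[[? _] [? _]]|[[? _] [[? _] _]]].
- by rewrite /rRB; case: trb => // [[[? _] [[? _] _]]].
- by rewrite /rKB; case: trb => // [[[? _] [? _] [? _] _]].
- move=> px py pz; have [-> -> ->] := permB m2 px py pz; by split.
Qed.


Lemma trbP m : reflect (tr m) (trb m).
Proof. exact: pbP. Qed.

Lemma HAK m : 2 < m -> Kax (@inA M A m) (@rE M m) (@rR M m) (@rK M m) /\ X5 A m.
Proof. by move=> m2; apply: (inK_onP A).1 => //; case: HA. Qed.

Lemma Kax_B m : 2 < m -> Kax (@inA B (fun _ => True) m) (@rE B m) (@rR B m) (@rK B m).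
Proof.
move=> m2; rewrite /= /rEB /rRB /rKB; case h: (trb m).
  exact: Kax_triv.
have ntr : ~ tr m by move/trbP; rewrite h.
apply: (Kax_pull (J := J' (@inA M A m)) (q := @q m)).
  by move=> t It; apply: Iu_rep.
apply: Kax_ext; exact: (HAK m2).1.
Qed.


Lemma X5_B m : 2 < m -> X5 (S := B) (fun _ => True) m.
Proof.
move=> m2; have m0 : 0 < m by apply: ltn_trans m2.
case h: (trb m).
{ exists nat, (fun _ => 0), (rotm m); split; [|split; [|split; [|split]]].
  - move=> x y Ix Iy; rewrite /= /rEB h; split => // _.
  - exact: rotm_inj.
  - exact: rotm_id.
  - by move=> x y _ _; rewrite /= /rRB h.
  - move=> x j _ /andP [j0 jm]; rewrite rotm_iter // add0n modn_small //.
    by move=> e0; rewrite e0 in j0. }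
have ntr : ~ tr m by move/trbP; rewrite h.
have [D [cls [f [H1 [H2 [H3 [H4 H5]]]]]]] := (HAK m2).2.
have IR : forall x : m.-tuple carB, inA (S := B) (fun _ => True) x -> inA A (rep x).
  move=> x [ux _]; apply: Iu_rep => //.
exists (D * bool)%type, (fun x => (cls (rep x), has isNew x)), (fun p => (f p.1, p.2)).
split; [|split; [|split; [|split]]].
- move=> x y Ix Iy; rewrite /= /rEB h /E' /q /=.
  have Ix' := IR _ Ix; have Iy' := IR _ Iy.
  split.
  + case=> /(H1 _ _ Ix' Iy') E1 F1; split; first by case: Ix.
    by split; first case: Iy.
  + move=> [_ [_ [F1 E1]]]; congr pair => //; exact/(H1 _ _ Ix' Iy').
- by move=> [a b] [c d] /= [] /H2 -> ->.
- by move=> [d b]; rewrite iter_pair H3.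
- move=> x y Ix Iy; rewrite /= /rRB h /R' /q /= => [[_ [_ [F1 R1]]]].
  by rewrite (H4 _ _ (IR _ Ix) (IR _ Iy) R1) F1.
- move=> x j Ix hj; rewrite iter_pair => [[]]; exact: H5 (IR _ Ix) hj.
Qed.


Lemma strong_from m (x : m.-tuple carB) (sg : nat -> m.-tuple (car M)) (f : bool)
  (s' : nat -> m.-tuple carB) :
  2 < m -> trb m = false -> cyc A sg -> s' 0 = x ->
  (forall i, i < m -> Iu (s' i) /\ q (s' i) = (sg i, f)) ->
  [/\ s' 0 = x,
      (forall i, i < m -> inA (S := B) (fun _ => True) (s' i)),
      (forall i j, i < m -> j < m -> i <> j -> ~ @rE B m (s' i) (s' j)),
      (forall i, i.+1 < m -> @rR B m (s' i) (s' i.+1)) &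
      @rR B m (s' m.-1) (s' 0)].
Proof.
move=> m2 h [c0 c1 c2 c3] s0 hs.
have m0 : 0 < m by apply: ltn_trans m2.
split => //.
- by move=> i im; have [[? _] _] := hs i im; split.
- move=> i j im jm ij; rewrite /= /rEB h.
  have [Ii ->] := hs i im; have [Ij ->] := hs j jm.
  by move=> [_ [_ [_ /= E1]]]; apply: (c1 i j).
- move=> i im; rewrite /= /rRB h.
  have [Ii ->] := hs i (ltnW im); have [Ij ->] := hs i.+1 im.
  by split => //; split => //; split => //; apply: c2.
- rewrite /= /rRB h.
  have mm : m.-1 < m by rewrite prednK.
  have [Ii ->] := hs m.-1 mm; have [Ij ->] := hs 0 m0.
  by split => //; split => //; split.
Qed.


Lemma mN m : ~ tr m -> m <= N.
Proof.
move=> ntr.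
have [x [ux hx]] : exists x : m.-tuple (car M), inA A x.
  apply: NNPP => hx; apply: ntr => x y Hx; case: hx; by exists x.
rewrite -(size_tuple x); apply: uniq_leq_size => // z /tnthP [i ->]; exact/HSA.
Qed.

Definition cf k (i : nat) : carB := if i < k.+1 then inr (inord i) else e (nth x0 S i).
Definition canon m k : m.-tuple carB := Tuple (introT eqP (size_mkseq (cf k) m)).

Lemma canon_uniq m k : m <= N -> uniq (canon m k).
Proof.
move=> mN; rewrite /= /mkseq map_inj_in_uniq ?iota_uniq // => i j.
rewrite !mem_iota !add0n => im jm; rewrite /cf.
have iN : i < N.+1 by apply: ltn_trans (leq_trans im mN) _.
have jN : j < N.+1 by apply: ltn_trans (leq_trans jm mN) _.
have iS : nth x0 S i \in S by apply: mem_nth; apply: leq_trans im mN.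
have jS : nth x0 S j \in S by apply: mem_nth; apply: leq_trans jm mN.
case: ifP => _; case: ifP => _.
- move=> [] /(congr1 val) /=; rewrite !inordK //.
- by move=> /(congr1 isNew); rewrite (e_in jS).1.
- by move=> /(congr1 isNew); rewrite (e_in iS).1.
- move=> /(e_inj iS jS) /eqP; rewrite nth_uniq //; first by move/eqP.
  + exact: leq_trans im mN.
  + exact: leq_trans jm mN.
Qed.

Lemma canon_count m k : k < m -> m <= N -> count isNew (canon m k) = k.+1.
Proof.
move=> km mN; rewrite /= /mkseq count_map.
rewrite (eq_in_count (a2 := fun i => i < k.+1)); first exact: count_lt_iota.
move=> i; rewrite mem_iota add0n => /andP [_ im] /=; rewrite /cf; case: ifP => // _.
by rewrite (e_in _).1 //; apply: mem_nth; apply: leq_trans im mN.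
Qed.

Lemma canon_q m k : k < m -> m <= N -> q (canon m k) = (sF m k, true).
Proof.
move=> km mN.
have hc : has isNew (canon m k) by rewrite has_count canon_count.
by rewrite /q /rep hc canon_count.
Qed.


Lemma strong_B : strong_cond (S := B) (fun _ => True).
Proof.
move=> m m2; case h: (trb m).
  by left => x y Ix Iy; rewrite /= /rEB h; split.
have ntr : ~ tr m by move/trbP; rewrite h.
have mN' := mN ntr.
have m0 : 0 < m by apply: ltn_trans m2.
right => x Ix.
have Iux : Iu x by exact: Ix.
case hx: (has isNew x).
- pose j := (count isNew x).-1.
  have jm : j < m.
    have h1 := count_size isNew x; have h2 : 0 < count isNew x by rewrite -has_count.
    rewrite size_tuple in h1; rewrite /j; lia.
  exists (fun i => if i == 0 then x else canon m ((j + i) %% m)).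
  apply: (strong_from (sg := fun i => sF m ((j + i) %% m)) (f := true)) => //.
    exact: cyc_shift (sF_cyc m2 ntr).
  move=> i im; case: eqP => [->|_].
    by split => //; rewrite /q /rep hx addn0 modn_small.
  split; first by split => //; apply: canon_uniq.
  by rewrite canon_q // ltn_mod.
- have Iy := Iu_rep m2 ntr Iux.
  case: (HA.2 m m2) => [Htr|Hc]; first by case: ntr.
  have [sg [s0 s1 s2 s3 s4]] := Hc _ Iy.
  exists (fun i => if i == 0 then x else map_tuple e (sg i)).
  apply: (strong_from (sg := sg) (f := false)) => //.
  move=> i im; case: eqP => [->|_].
    by split => //; rewrite /q hx s0.
  have [_ hA] := s1 i im.
  have [h1 h2] := rep_e hA.
  split; last by rewrite /q h1 h2.
  split => //; rewrite map_inj_in_uniq; first by case: (s1 i im).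
  move=> a b /tnthP [k ->] /tnthP [l ->]; apply: e_inj; exact/HSA.
Qed.


Lemma in_C_B : in_C B.
Proof.
split; last split.
- exists ([seq inl i | i <- enum 'I_N] ++ [seq inr i | i <- enum 'I_N.+1] : seq carB).
  move=> [i|i] _; rewrite mem_cat; apply/orP; [left|right]; apply: map_f; exact: mem_enum.
- exact: Lwf_B.
- split; last exact: strong_B.
  apply/inK_onP => m m2; split; [exact: Kax_B | exact: X5_B].
Qed.


Lemma Iu_e m (x : m.-tuple (car M)) : (forall i, A (tnth x i)) -> Iu (map_tuple e x) = uniq x.
Proof.
move=> hx; apply: propositional_extensionality; rewrite /Iu /= map_inj_in_uniq; first by split => [[]|].
move=> a b /tnthP [k ->] /tnthP [l ->]; apply: e_inj; exact/HSA.
Qed.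

Lemma emb_e : emb_on (S2 := B) A e.
Proof.
split.
  by move=> x y Ax Ay; apply: e_inj; apply/HSA.
move=> m m2 x y z hx hy hz.
have [Er _ _] := (HAK m2).1.1.
have [Ri Rr _ _] := (HAK m2).1.2.1.
have Ux : forall w : m.-tuple (car M), (forall i, A (tnth w i)) -> uniq w -> inA A w by move=> w hw uw; split.
have [nx rx] := rep_e hx; have [ny ry] := rep_e hy; have [nz rz] := rep_e hz.
have Lx := (HL m2 x y z x y z).1; have Lr := (HL m2 x y z x y z).2.1;
have Lk := (HL m2 x y z x y z).2.2.1.
rewrite /= /rEB /rRB /rKB /E' /R' /K' /T1 /q /= nx ny nz rx ry rz (Iu_e hx) (Iu_e hy) (Iu_e hz).
case h: (trb m); [have tm : tr m by apply/trbP; rewrite h | have ntr : ~ tr m by move/trbP; rewrite h].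
- split.
  + split; first by move/Lx.
    by move=> [ux uy]; apply: tm; apply: Ux.
  + split => // /[dup] /Lr [ux uy] R1.
    apply: (Ri y); first exact: Ux.
    apply: (Rr x y y y) => //; try exact: Ux; first by apply: tm; apply: Ux.
    by apply: Er; apply: Ux.
  + split => // /[dup] /Lk [ux uy uz] K1.
    have := Knot (HAK m2).1 (Ux _ hx ux) (Ux _ hy uy) (Ux _ hz uz) K1.
    by case; case; apply: tm; apply: Ux.
- split.
  + split; first by move=> /[dup] /Lx [ux uy] E1.
    by case=> _ [_ [_ ]].
  + split; first by move=> /[dup] /Lr [ux uy] E1.
    by case=> _ [_ [_ ]].
  + split; first by move=> /[dup] /Lk [ux uy uz] E1; split => //; left.
    by case=> _ _ _ [//|[[]|[[]|[]]]].
Qed.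


Lemma d_exists : exists dB : n.-tuple carB, forall x y : n.-tuple (car M), inA A x -> inA A y ->
  [/\ rK x u y -> rKB (map_tuple e x) dB (map_tuple e y),
      ~ rE x u -> rKB (map_tuple e x) (map_tuple e u) dB &
      ~ rE u y -> rKB (map_tuple e u) dB (map_tuple e y)].
Proof.
have ntr : ~ tr n by [].
have h : trb n = false by apply/negbTE/negP => /trbP.
have nN := mN ntr.
have n0 : 0 < n by apply: ltn_trans Hn.
exists (canon n 0) => x y [ux hx] [uy hy].
have [Er Es _] := (HAK Hn).1.1.
have [nx rx] := rep_e hx; have [ny ry] := rep_e hy; have [nu ru] := rep_e Hu.2.
have Id : Iu (canon n 0) by split => //; apply: canon_uniq.
rewrite /rKB h (canon_q n0 nN) sF_n /K' /T1 /q /= nx ny nu rx ry ru (Iu_e hx) (Iu_e hy) (Iu_e Hu.2).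
have uu := Hu.1.
split.
- by move=> K1; split => //; left.
- move=> nE; split => //; right; right; left; split => //; first exact: Er.
  by move/(Es _ _ Hu (conj ux hx)).
- move=> nE; split => //; right; left; split => //; exact: Er.
Qed.

End Build.


Theorem lemma2p1 (M : Lstr) (HM : generic M) (n : nat) (Hn : 2 < n)
  (a b : n.-tuple (car M)) (Hab : rR a b) :
  (forall c, rK a c b -> ~ rK a c c) /\
  (forall c c', rK a c b -> rK a c' b -> rK a c c' -> ~ rK a c' c) /\
  (forall c c' c'', rK a c b -> rK a c' b -> rK a c'' b ->
     rK a c c' -> rK a c' c'' -> rK a c c'') /\
  (forall c c', rK a c b -> rK a c' b -> ~ rE c c' -> rK a c c' \/ rK a c' c) /\
  (forall c c', rK a c b -> rK a c' b -> rK a c c' ->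
     exists d, [/\ rK a d b, rK a c d & rK a d c']) /\
  (forall c, rK a c b -> exists d, rK a d b /\ rK a d c) /\
  (forall c, rK a c b -> exists d, rK a d b /\ rK a c d).
Proof.
case: HM => HL [_ [_ [[Ak [HAk [Hmono Hcov]]] Hext]]].
have mono : forall k k' x, k <= k' -> Ak k x -> Ak k' x.
  move=> k k' x kk; rewrite -(subnKC kk); elim: (k' - k) => [|j IH]; rewrite ?addn0 // addnS.
  by move=> h; apply: Hmono; apply: IH.
have cover : forall s : seq (car M), exists k, forall x, x \in s -> Ak k x.
  elim=> [|x s [k Hk]]; first by exists 0.
  have [k1 H1] := Hcov x.
  exists (maxn k k1) => y; rewrite in_cons => /orP [/eqP ->|ys].
    by apply: mono H1; apply: leq_maxr.
  by apply: mono (Hk _ ys); apply: leq_maxl.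
have loc : forall ts : seq (n.-tuple (car M)), (forall t, t \in ts -> uniq t) ->
    exists k, forall t, t \in ts -> inA (Ak k) t.
  move=> ts hts; have [k Hk] := cover (flatten [seq val t | t <- ts]).
  exists k => t tts; split; first exact: hts.
  by move=> i; apply: Hk; apply/flatten_mapP; exists t => //; apply: mem_tnth.
have UK : forall x y z : n.-tuple (car M), rK x y z -> [/\ uniq x, uniq y & uniq z].
  by move=> x y z h; apply: (HL n Hn x y z x y z).2.2.1.
have UR : forall x y : n.-tuple (car M), rR x y -> uniq x /\ uniq y.
  by move=> x y h; apply: (HL n Hn x y x x y x).2.1.
have KA : forall k, Kax (@inA M (Ak k) n) (@rE M n) (@rR M n) (@rK M n).
  by move=> k; apply: ((inK_onP (Ak k)).1 (HAk k).2.1 n Hn).1.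
have [ua ub] := UR _ _ Hab.
have n0 : 0 < n by apply: ltn_trans Hn.
have gen : forall (u : n.-tuple (car M)) k, inA (Ak k) a -> inA (Ak k) b -> inA (Ak k) u ->
    exists d, forall x y, inA (Ak k) x -> inA (Ak k) y ->
      [/\ rK x u y -> rK x d y, ~ rE x u -> rK x u d & ~ rE u y -> rK u d y].
  move=> u k Ha Hb Hu.
  have [S0 HS0] := (HAk k).1.
  pose S := undup [seq x <- S0 | pb (Ak k x)].
  have HSu : uniq S by apply: undup_uniq.
  have HSA : forall x, x \in S <-> Ak k x.
    move=> x; rewrite mem_undup mem_filter; split.
      by case/andP => /pbP.
    by move=> h; apply/andP; split; [apply/pbP | apply: HS0].
  pose x0 := tnth a (Ordinal n0).
  have Hnt : ~ (forall x y : n.-tuple (car M), inA (Ak k) x -> inA (Ak k) y -> rE x y).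
    move=> tr; have [[Er _ _] [[Ri Rr _ _] _]] := KA k.
    apply: (Ri b Hb); apply: (Rr a b b b) => //; first exact: tr.
    exact: Er.
  have [dB HdB] := d_exists (HAk k).2 HSu HSA x0 Hn Hu Hnt.
  have HB := in_C_B HL (HAk k).2 HSu HSA x0 Hn Hu Hnt.
  have He := emb_e HL (HAk k).2 HSA x0 Hn Hu Hnt.
  have [g [Hg [Hge _]]] := Hext (Ak k) (HAk k).1 (HAk k).2 _ HB (e S) He.
  have mapK : forall x : n.-tuple (car M), inA (Ak k) x -> map_tuple g (map_tuple (e S) x) = x.
    by move=> x [_ hx]; apply: eq_from_tnth => i; rewrite !tnth_map Hge.
  have tK : forall X Y Z : n.-tuple (car (B (HAk k).2 S x0 Hn Hu Hnt)), rK X Y Z ->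
      rK (map_tuple g X) (map_tuple g Y) (map_tuple g Z).
    move=> X Y Z h; have [_ _ hK] := Hg.2 n Hn X Y Z (fun _ => I) (fun _ => I) (fun _ => I).
    by apply/hK.
  exists (map_tuple g dB) => x y Hx Hy.
  have [P1 P2 P3] := HdB x y Hx Hy.
  split; move=> h;
    [have := tK _ _ _ (P1 h) | have := tK _ _ _ (P2 h) | have := tK _ _ _ (P3 h)];
    by rewrite !mapK.
have L2 : forall c, rK a c b -> exists k, [/\ inA (Ak k) a, inA (Ak k) b & inA (Ak k) c].
  move=> c h; have [_ uc _] := UK _ _ _ h.
  have hu : forall t, t \in [:: a; b; c] -> uniq t.
    by move=> t; rewrite !inE => /or3P [] /eqP ->.
  have [k Hk] := loc _ hu.
  by exists k; split; apply: Hk; rewrite !inE eqxx ?orbT.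
have L3 : forall c c', rK a c b -> rK a c' b -> exists k,
    [/\ inA (Ak k) a, inA (Ak k) b, inA (Ak k) c & inA (Ak k) c'].
  move=> c c' h h'; have [_ uc _] := UK _ _ _ h; have [_ uc' _] := UK _ _ _ h'.
  have hu : forall t, t \in [:: a; b; c; c'] -> uniq t.
    by move=> t; rewrite !inE => /or4P [] /eqP ->.
  have [k Hk] := loc _ hu.
  by exists k; split; apply: Hk; rewrite !inE eqxx ?orbT.
split; [|split; [|split; [|split; [|split; [|split]]]]].
- move=> c h; have [k [Ha Hb Hc]] := L2 c h.
  have [[Er _ _] _] := KA k.
  by move=> h'; have [_ [nE _]] := Knot (KA k) Ha Hc Hc h'; apply: nE; apply: Er.
- move=> c c' h h' h1; have [k [Ha Hb Hc Hc']] := L3 c c' h h'.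
  have [_ [_ [[_ Kc Ka _ _] _]]] := KA k.
  move=> h2; apply: (Ka a c c' Ha Hc Hc' h1); exact: Kc.
- move=> c c' c'' h h' h'' h1 h2.
  have [_ uc'' _] := UK _ _ _ h''.
  have hu : forall t, t \in [:: a; b; c; c'; c''] -> uniq t.
    have [? ? ?] := UK _ _ _ h; have [? ? ?] := UK _ _ _ h'.
    by move=> t; rewrite !inE => /or4P [/eqP ->|/eqP ->|/eqP ->|/orP [/eqP ->|/eqP ->]].
  have [k Hk] := loc _ hu.
  have [_ [_ [[_ _ _ Kt _] _]]] := KA k.
  by apply: (Kt a c c' c'') => //; apply: Hk; rewrite !inE eqxx ?orbT.
- move=> c c' h h' nE; have [k [Ha Hb Hc Hc']] := L3 c c' h h'.
  have [_ [_ [[_ Kc _ _ Ko] _]]] := KA k.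
  have [n1 _] := Knot (KA k) Ha Hc Hb h.
  have [n2 _] := Knot (KA k) Ha Hc' Hb h'.
  case: (Ko a c c' Ha Hc Hc' n1 nE n2) => H; first by left.
  by right; apply: (Kc c a c') => //; apply: (Kc c' c a).
- move=> c c' h h' h1; have [k [Ha Hb Hc Hc']] := L3 c c' h h'.
  have [d Hd] := gen c k Ha Hb Hc.
  have [P1 P2 _] := Hd a b Ha Hb; have [P3 _ _] := Hd a c' Ha Hc'.
  have [n1 _] := Knot (KA k) Ha Hc Hb h.
  by exists d; split; [exact: P1 | exact: P2 | exact: P3].
- move=> c h; have [k [Ha Hb Hc]] := L2 c h.
  have [d Hd] := gen a k Ha Hb Ha.
  have [n1 [n2 n3]] := Knot (KA k) Ha Hc Hb h.
  have [_ _ P1] := Hd a b Ha Hb; have [_ _ P2] := Hd a c Ha Hc.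
  by exists d; split; [exact: P1 | exact: P2].
- move=> c h; have [k [Ha Hb Hc]] := L2 c h.
  have [d Hd] := gen c k Ha Hb Hc.
  have [n1 [n2 n3]] := Knot (KA k) Ha Hc Hb h.
  have [P1 P2 _] := Hd a b Ha Hb.
  by exists d; split; [exact: P1 | exact: P2].
Qed.
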